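(* Let $G=(V,E,w)$ be a connected undirected graph with positive edge weights, let $v\in V$, let $E_v$ be a set of node pairs $\{u,v\}$ with $u\neq v$ and $\{u,v\}\notin E$, each $e\in E_v$ having a given positive weight $w(e)$, and let $k\le |E_v|$ be a positive integer. For $S\subseteq E_v$ let $\mathcal{R}(S)$ be the resistance distance of $v$ in $G(S)$. Consider the greedy procedure: start with $S=\emptyset$; for $i=1,\dots,k$, choose $e_i\in E_v\setminus S$ maximizing $\mathcal{R}(S)-\mathcal{R}(S\cup\{e\})$ over $e\in E_v\setminus S$ (ties broken arbitrarily) and set $S\leftarrow S\cup\{e_i\}$. Then the returned set $S$ (with $|S|=k$) satisfies $$\mathcal{R}(\emptyset)-\mathcal{R}(S)\ge\left(1-\frac{1}{e}\right)\left(\mathcal{R}(\emptyset)-\mathcal{R}(S^* )\right),$$ where $S^*$ is a minimizer of $\mathcal{R}(S')$ over all $S'\subseteq E_v$ with $|S'|=k$, and $e$ in $1-\frac1e$ is Euler's number.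
   Context: For a connected weighted graph $H$ on node set $V$, its Laplacian is $\mathbf{L}=\mathbf{D}-\mathbf{A}$ ($\mathbf{A}$ weighted adjacency matrix, $\mathbf{D}$ diagonal weighted degree matrix), with Moore–Penrose pseudoinverse $\mathbf{L}^\dagger$. The resistance distance between nodes $a,b$ is $\mathcal{R}_{ab}=(\mathbf{e}_a-\mathbf{e}_b)^\top\mathbf{L}^\dagger(\mathbf{e}_a-\mathbf{e}_b)$, and the resistance distance of node $v$ is $\mathcal{R}_v=\sum_{u\in V}\mathcal{R}_{uv}$. For $S\subseteq E_v$, $G(S)=(V,E\cup S,w')$ is the graph obtained from $G$ by adding the edges of $S$ with their given weights. *)

(* Defs.v *)
From HB Require Import structures.
From mathcomp Require Import all_boot all_order all_algebra.
From mathcomp Require Import reals sequences exp.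
From Stdlib Require Import ClassicalEpsilon.
Set Implicit Arguments. Unset Strict Implicit. Unset Printing Implicit Defensive.
Import Order.TTheory GRing.Theory Num.Theory.
Local Open Scope ring_scope.

Section Defs.
Variable R : realType.
Variable n : nat.

(* Weighted graphs on node set 'I_n are given by a weight function w;
   the edge set is {(i,j) | 0 < w i j}. *)
Definition wgraph (w : 'I_n -> 'I_n -> R) : Prop :=
  (forall i j, w i j = w j i) /\ (forall i, w i i = 0) /\ (forall i j, 0 <= w i j).

Definition edge (w : 'I_n -> 'I_n -> R) : rel 'I_n := fun i j => 0 < w i j.

Definition connected_graph (w : 'I_n -> 'I_n -> R) : Prop :=
  forall i j, connect (edge w) i j.

Definition adjacency (w : 'I_n -> 'I_n -> R) : 'M[R]_n := \matrix_(i, j) w i j.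
Definition degmx (w : 'I_n -> 'I_n -> R) : 'M[R]_n :=
  \matrix_(i, j) (if i == j then \sum_(k < n) w i k else 0).
Definition laplacian (w : 'I_n -> 'I_n -> R) : 'M[R]_n := degmx w - adjacency w.

(* Moore--Penrose pseudoinverse (real case: conjugate transpose = transpose). *)
Definition penrose (A X : 'M[R]_n) : Prop :=
  [/\ A *m X *m A = A, X *m A *m X = X, (A *m X)^T = A *m X & (X *m A)^T = X *m A].
Definition pinv (A : 'M[R]_n) : 'M[R]_n :=
  epsilon (inhabits 0) (fun X => penrose A X).

Definition unitv (a : 'I_n) : 'cV[R]_n := \col_i (if i == a then 1 else 0).

Definition resistance (w : 'I_n -> 'I_n -> R) (a b : 'I_n) : R :=
  ((unitv a - unitv b)^T *m pinv (laplacian w) *m (unitv a - unitv b)) 0 0.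

Definition node_resistance (w : 'I_n -> 'I_n -> R) (v : 'I_n) : R :=
  \sum_(u < n) resistance w u v.

(* G(S): candidate edges {u,v} (u in S) with weight wv u added. *)
Definition add_edges (w : 'I_n -> 'I_n -> R) (v : 'I_n) (wv : 'I_n -> R)
  (S : {set 'I_n}) : 'I_n -> 'I_n -> R :=
  fun i j => w i j + (if (i == v) && (j \in S) then wv j else 0)
                   + (if (j == v) && (i \in S) then wv i else 0).

Definition RS (w : 'I_n -> 'I_n -> R) (v : 'I_n) (wv : 'I_n -> R) (S : {set 'I_n}) : R :=
  node_resistance (add_edges w v wv S) v.

(* s = [:: e_1; ...; e_k] is a possible run of the greedy algorithm
   (arbitrary tie-breaking) on candidate set U, where S_i = {e_1,...,e_i}. *)
Definition greedy_run (w : 'I_n -> 'I_n -> R) (v : 'I_n) (wv : 'I_n -> R)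
  (U : {set 'I_n}) (k : nat) (s : seq 'I_n) : Prop :=
  size s = k /\
  forall i, (i < k)%N ->
    let Si := [set x in take i s] in
    forall d : 'I_n, let ei := nth d s i in
    ei \in U :\: Si /\
    forall e, e \in U :\: Si ->
      RS w v wv Si - RS w v wv (e |: Si) <= RS w v wv Si - RS w v wv (ei |: Si).

End Defs.

(* Main.v *)
Require Import Defs.
From HB Require Import structures.
From mathcomp Require Import all_boot all_order all_algebra.
From mathcomp Require Import reals sequences exp.
From mathcomp Require Import ring lra.
From Stdlib Require Import ClassicalEpsilon.
Import Order.TTheory GRing.Theory Num.Theory.
Local Open Scope ring_scope.
Set Implicit Arguments. Unset Strict Implicit. Unset Printing Implicit Defensive.

Section Bridge.
Variables (R : realType) (n : nat) (v : 'I_n).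
Implicit Types (W : 'I_n -> 'I_n -> R).

Definition gmx W : 'M[R]_n := \matrix_(i, j)
  (if i == v then (j == v)%:R else if j == v then 0 else laplacian W i j).

Lemma lapE W i j : laplacian W i j = (if i == j then \sum_k W i k else 0) - W i j.
Proof. by rewrite !mxE. Qed.

Lemma sum_if_eq (i : 'I_n) (c : R) : \sum_(j < n) (if i == j then c else 0) = c.
Proof.
rewrite (bigD1 i) //= eqxx big1 ?addr0 // => j /negbTE; rewrite eq_sym => ->.
by [].
Qed.

Lemma sum_if_eq' (i : 'I_n) (F : 'I_n -> R) : \sum_(j < n) (if j == i then F j else 0) = F i.
Proof.
by rewrite (bigD1 i) //= eqxx big1 ?addr0 // => j /negbTE ->.
Qed.

Lemma lap_row0 W i : \sum_j laplacian W i j = 0.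
Proof.
under eq_bigr do rewrite lapE.
by rewrite sumrB sum_if_eq subrr.
Qed.

Lemma lap_sym W : (forall i j, W i j = W j i) -> forall i j, laplacian W i j = laplacian W j i.
Proof.
move=> sW i j; rewrite !lapE sW; case: (eqVneq i j) => [->|ij] //.
Qed.

Lemma lap_col0 W : (forall i j, W i j = W j i) -> forall j, \sum_i laplacian W i j = 0.
Proof.
move=> sW j; under eq_bigr do rewrite lap_sym //; exact: lap_row0.
Qed.

Lemma lap_tr W : (forall i j, W i j = W j i) -> (laplacian W)^T = laplacian W.
Proof. by move=> sW; apply/matrixP => i j; rewrite mxE lap_sym. Qed.

Lemma lap_mulE W (x : 'cV[R]_n) i :
  (laplacian W *m x) i 0 = \sum_k W i k * (x i 0 - x k 0).
Proof.
rewrite mxE.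
under eq_bigr do rewrite lapE mulrBl.
rewrite sumrB.
have -> : \sum_(k < n) (if i == k then \sum_k0 W i k0 else 0) * x k 0
    = (\sum_k0 W i k0) * x i 0.
  rewrite [LHS](bigD1 i) //= eqxx [X in _ + X]big1 ?addr0 // => j ji.
  by rewrite eq_sym (negbTE ji) mul0r.
under [X in _ = X]eq_bigr do rewrite mulrBr.
by rewrite sumrB mulr_suml.
Qed.

Variable W : 'I_n -> 'I_n -> R.
Hypothesis sW : forall i j, W i j = W j i.
Hypothesis uG : gmx W \in unitmx.

Let L := laplacian W.
Let Xg := invmx (gmx W).

Lemma gmx_tr : (gmx W)^T = gmx W.
Proof.
apply/matrixP => i j; rewrite !mxE.
have [iv|iv] := eqVneq i v; have [jv|jv] := eqVneq j v => //=.
by rewrite -!lapE lap_sym.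
Qed.

Lemma Xg_tr : Xg^T = Xg.
Proof. by rewrite /Xg trmx_inv gmx_tr. Qed.

Lemma XgvE j : Xg v j = (j == v)%:R.
Proof.
have := mulmxV uG; move/matrixP/(_ v j).
rewrite !mxE eq_sym => <-.
rewrite (bigD1 v) //= big1 ?addr0; first by rewrite !mxE eqxx mul1r.
by move=> k kv; rewrite !mxE eqxx (negbTE kv) mul0r.
Qed.

Lemma XgvE' j : Xg j v = (j == v)%:R.
Proof. by rewrite -Xg_tr mxE XgvE. Qed.

Lemma LXgE i j : j != v -> (L *m Xg) i j = (i == j)%:R - (i == v)%:R.
Proof.
move=> jv.
have key : forall i', i' != v -> (L *m Xg) i' j = (i' == j)%:R.
  move=> i' i'v; have := mulmxV uG; move/matrixP/(_ i' j).
  rewrite !mxE => <-; apply: eq_bigr => k _.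
  rewrite !mxE (negbTE i'v); case: (eqVneq k v) => [->|kv].
    by rewrite XgvE (negbTE jv) !mulr0.
  by [].
case: (eqVneq i v) => [->|iv]; last by rewrite key // subr0.
have : \sum_i (L *m Xg) i j = 0.
  under eq_bigr do rewrite mxE.
  rewrite exchange_big /=.
  by apply: big1 => k _; rewrite -mulr_suml lap_col0 // mul0r.
rewrite (bigD1 v) //= => /eqP; rewrite addr_eq0 => /eqP ->.
rewrite (eq_bigr (fun i2 => (i2 == j)%:R)); last by move=> i2 /key.
rewrite (bigD1 j) //= eqxx big1 ?addr0.
  by rewrite eq_sym (negbTE jv) sub0r.
by move=> k /andP [_ /negbTE ->].
Qed.


Let J : 'M[R]_n := const_mx 1.
Let E : 'M[R]_n := \matrix_(i, j) (i == v)%:R.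
Let Pi : 'M[R]_n := 1%:M - (n%:R)^-1 *: J.
Let G0 : 'M[R]_n := \matrix_(i, j) if (i == v) || (j == v) then 0 else Xg i j.

Lemma nR_neq0 : (n%:R : R) != 0.
Proof. by rewrite pnatr_eq0 -lt0n (leq_ltn_trans _ (ltn_ord v)). Qed.

Lemma Ltr : L^T = L.
Proof. exact: lap_tr. Qed.

Lemma LJ : L *m J = 0.
Proof.
apply/matrixP => i j; rewrite mxE [RHS]mxE.
under eq_bigr do rewrite [J _ _]mxE mulr1.
exact: lap_row0.
Qed.

Lemma JL : J *m L = 0.
Proof.
apply/matrixP => i j; rewrite mxE [RHS]mxE.
under eq_bigr do rewrite [J _ _]mxE mul1r.
exact: lap_col0.
Qed.

Lemma EL : E *m L = 0.
Proof.
apply/matrixP => i j; rewrite mxE [RHS]mxE.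
under eq_bigr do rewrite [E _ _]mxE.
by rewrite -mulr_sumr lap_col0 // mulr0.
Qed.

Lemma JJ : J *m J = n%:R *: J.
Proof.
apply/matrixP => i j; rewrite !mxE.
under eq_bigr do rewrite !mxE mulr1.
by rewrite sumr_const card_ord mulr1.
Qed.

Lemma EJ : E *m J = n%:R *: E.
Proof.
apply/matrixP => i j; rewrite !mxE.
under eq_bigr do rewrite !mxE mulr1.
by rewrite sumr_const card_ord mulr_natl.
Qed.

Lemma Jtr : J^T = J.
Proof. by apply/matrixP => i j; rewrite !mxE. Qed.

Lemma Pitr : Pi^T = Pi.
Proof. by apply/matrixP => i j; rewrite !mxE eq_sym. Qed.

Lemma LPi : L *m Pi = L.
Proof. by rewrite /Pi mulmxBr mulmx1 -scalemxAr LJ scaler0 subr0. Qed.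

Lemma PiL : Pi *m L = L.
Proof. by rewrite /Pi mulmxBl mul1mx -scalemxAl JL scaler0 subr0. Qed.

Lemma EPi : E *m Pi = 0.
Proof.
by rewrite /Pi mulmxBr mulmx1 -scalemxAr EJ scalerA mulVf ?nR_neq0 // scale1r subrr.
Qed.

Lemma PiEt : Pi *m E^T = 0.
Proof. by rewrite -Pitr -trmx_mul EPi trmx0. Qed.

Lemma PiPi : Pi *m Pi = Pi.
Proof.
rewrite {1}/Pi mulmxBl mul1mx -scalemxAl /Pi mulmxBr mulmx1 -scalemxAr JJ.
by rewrite scalerA mulVf ?nR_neq0 // scale1r subrr scaler0 subr0.
Qed.

Lemma LG0 : L *m G0 = 1%:M - E.
Proof.
apply/matrixP => i j; rewrite !mxE.
have [jv|jv] := eqVneq j v.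
  rewrite big1; last by move=> k _; rewrite !mxE jv eqxx orbT mulr0.
  by rewrite jv subrr.
have := LXgE i jv; rewrite mxE => <-.
apply: eq_bigr => k _; rewrite !mxE (negbTE jv) orbF.
by case: (eqVneq k v) => [->|]; rewrite ?XgvE ?(negbTE jv) ?mulr0.
Qed.

Lemma G0tr : G0^T = G0.
Proof.
apply/matrixP => i j; rewrite !mxE orbC.
by have := Xg_tr; move/matrixP/(_ i j); rewrite mxE => ->.
Qed.

Lemma G0L : G0 *m L = 1%:M - E^T.
Proof.
rewrite -G0tr -Ltr -trmx_mul LG0.
by apply/matrixP => i j; rewrite !mxE eq_sym.
Qed.

Let X := Pi *m G0 *m Pi.

Lemma LX : L *m X = Pi.
Proof.
by rewrite /X !mulmxA LPi LG0 mulmxBl mul1mx EPi subr0.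
Qed.

Lemma XL : X *m L = Pi.
Proof.
by rewrite /X -mulmxA PiL -mulmxA G0L mulmxBr mulmx1 PiEt subr0.
Qed.

Lemma penrose_ex : exists Y, penrose (laplacian W) Y.
Proof.
exists X; split.
- by rewrite -/L LX PiL.
- by rewrite -/L XL /X !mulmxA PiPi.
- by rewrite -/L LX Pitr.
- by rewrite -/L XL Pitr.
Qed.


Lemma pinv_LPL : L *m pinv L *m L = L.
Proof.
have hP : penrose L (pinv L) by rewrite /pinv; apply: epsilon_spec; exact: penrose_ex.
by case: hP.
Qed.

Lemma res_formula u : u != v -> resistance W u v = Xg u u.
Proof.
move=> uv.
set z := Xg *m unitv R u.
have Lz : L *m z = unitv R u - unitv R v.
  apply/matrixP => i j; rewrite ord1 mulmxA mxE.
  under eq_bigr do rewrite [unitv R u _ _]mxE.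
  rewrite (bigD1 u) //= eqxx mulr1 big1 ?addr0; last first.
    by move=> k /negbTE ->; rewrite mulr0.
  rewrite LXgE // !mxE.
  by case: (i == u); case: (i == v).
rewrite /resistance -Lz trmx_mul Ltr.
have e : z^T *m L *m pinv L *m L = z^T *m (L *m pinv L *m L) by rewrite !mulmxA.
rewrite mulmxA e pinv_LPL -mulmxA Lz mxE.
under eq_bigr do rewrite !mxE mulrBr.
rewrite sumrB.
under eq_bigr do rewrite (fun_if (fun t => _ * t)) mulr1 mulr0.
under [X in _ - X]eq_bigr do rewrite (fun_if (fun t => _ * t)) mulr1 mulr0.
rewrite !sum_if_eq'.
rewrite /unitv.
under eq_bigr do rewrite mxE (fun_if (fun t => _ * t)) mulr1 mulr0.
under [X in _ - X]eq_bigr do rewrite mxE (fun_if (fun t => _ * t)) mulr1 mulr0.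
by rewrite !sum_if_eq' XgvE (negbTE uv) subr0.
Qed.

Lemma node_res : node_resistance W v = \tr Xg - 1.
Proof.
rewrite /node_resistance /mxtrace (bigD1 v) //= [X in _ = X - _](bigD1 v) //=.
rewrite XgvE eqxx /resistance subrr mulmx0 mxE add0r addrC addrK.
by apply: eq_bigr => u uv; rewrite -/(resistance W u v) res_formula.
Qed.

End Bridge.


Lemma inj_unit (R : realType) (n : nat) (A : 'M[R]_n) :
  (forall y : 'cV_n, A *m y = 0 -> y = 0) -> A \in unitmx.
Proof.
move=> H; rewrite -unitmx_tr -row_free_unit -kermx_eq0.
apply/eqP/row_matrixP => i; rewrite row0.
set x := row i (kermx A^T).
have hx : x *m A^T = 0 by rewrite /x -row_mul mulmx_ker row0.
have : A *m x^T = 0 by rewrite -[A]trmxK -trmx_mul hx trmx0.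
by move/H/(congr1 trmx); rewrite trmxK trmx0.
Qed.

Section Mono.
Variables (R : realType) (n : nat) (v : 'I_n) (w : 'I_n -> 'I_n -> R).
Hypothesis wg : wgraph w.
Hypothesis cw : connected_graph w.

Definition Bd (d : 'I_n -> R) : 'M[R]_n :=
  gmx v w + \matrix_(i, j) ((i == j)%:R * d i).

Lemma gmxE (W : 'I_n -> 'I_n -> R) i j : gmx v W i j =
  (if i == v then (j == v)%:R else if j == v then 0 else laplacian W i j).
Proof. by rewrite /gmx mxE. Qed.

Lemma colfE (f : 'I_n -> R) k : (\col_k0 f k0) k 0 = f k.
Proof. by rewrite mxE. Qed.

Lemma BdE d a b : Bd d a b = gmx v w a b + (a == b)%:R * d a.
Proof. by rewrite /Bd [LHS]mxE [X in _ + X = _]mxE. Qed.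

Lemma BdBE d d' a b : (Bd d' - Bd d) a b = (a == b)%:R * (d' a - d a).
Proof. by rewrite [LHS]mxE [X in _ + X = _]mxE !BdE; ring. Qed.

Definition valid (d : 'I_n -> R) := (forall i, 0 <= d i) /\ d v = 0.

Definition ytf (y : 'cV[R]_n) k := if k == v then 0 else y k 0.

Lemma Bd_row d (y : 'cV[R]_n) i : i != v ->
  (Bd d *m y) i 0 = \sum_k w i k * (ytf y i - ytf y k) + d i * y i 0.
Proof.
move=> iv; rewrite mulmxDl mxE [X in _ + X]mxE.
rewrite [X in _ + X](bigD1 i) //= [X in _ + (_ + X)]big1; last first.
  by move=> k /negbTE ki; rewrite mxE eq_sym ki mul0r mul0r.
rewrite mxE eqxx mul1r addr0; congr (_ + _).
have -> : \sum_k w i k * (ytf y i - ytf y k) = (laplacian w *m \col_k ytf y k) i 0.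
  by rewrite lap_mulE; apply: eq_bigr => k _; rewrite !mxE.
rewrite mxE [RHS]mxE; apply: eq_bigr => k _; rewrite gmxE colfE /ytf (negbTE iv).
by case: (k == v); rewrite ?mul0r ?mulr0.
Qed.

Lemma Bd_rowv d (y : 'cV[R]_n) : d v = 0 -> (Bd d *m y) v 0 = y v 0.
Proof.
move=> dv; rewrite mxE (bigD1 v) //= big1 ?addr0.
  by rewrite !mxE !eqxx dv mulr0 addr0 mul1r.
by move=> k kv; rewrite !mxE eqxx (negbTE kv) dv mulr0 addr0 mul0r.
Qed.

Lemma minp d (y : 'cV[R]_n) : valid d ->
  (forall i, 0 <= (Bd d *m y) i 0) -> forall i, 0 <= y i 0.
Proof.
move=> [d0 dv] H j; rewrite leNgt; apply/negP => yj.
case: (@arg_minP _ R _ v xpredT (fun i => y i 0) isT) => i0 _ Hmin.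
set m := y i0 0 in Hmin.
have mneg : m < 0 by apply: le_lt_trans (Hmin j isT) yj.
have yv : 0 <= y v 0 by rewrite -(Bd_rowv y dv).
have ytge : forall k, m <= ytf y k.
  by move=> k; rewrite /ytf; case: eqP => _; [exact: ltW | exact: Hmin].
have step : forall x z, ytf y x = m -> edge w x z -> ytf y z = m.
  move=> x z Qx exz.
  have xv : x != v by apply/eqP => xv; move: Qx; rewrite /ytf xv eqxx => m0; move: mneg; rewrite -m0 ltxx.
  have := H x; rewrite Bd_row // Qx.
  have yx : y x 0 = m by move: Qx; rewrite /ytf (negbTE xv).
  rewrite yx => hs.
  have hs' : \sum_k w x k * (ytf y k - m) + d x * (- m) <= 0.
    rewrite -oppr_ge0 opprD -mulrN opprK -sumrN.
    by under eq_bigr do rewrite -mulrN opprB.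
  have t0 : forall k, 0 <= w x k * (ytf y k - m).
    by move=> k; apply: mulr_ge0; [case: wg => _ [_] | rewrite subr_ge0].
  have d0' : 0 <= d x * (- m) by apply: mulr_ge0 => //; rewrite oppr_ge0 ltW.
  have sum0 : \sum_k w x k * (ytf y k - m) = 0.
    apply/eqP; rewrite eq_le; apply/andP; split; last by apply: sumr_ge0 => k _; exact: t0.
    by apply: le_trans hs'; rewrite lerDl.
  have := @psumr_eq0P _ _ xpredT (fun k => w x k * (ytf y k - m)) (fun k _ => t0 k) sum0 z isT.
  move/eqP; rewrite mulf_eq0 => /orP [/eqP wz|]; first by move: exz; rewrite /edge wz ltxx.
  by rewrite subr_eq0 => /eqP.
have Q0 : ytf y i0 = m.
  rewrite /ytf; case: eqP => // i0v; move: yv; rewrite -i0v -/m => /(lt_le_trans mneg).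
  by rewrite ltxx.
have : connect (edge w) i0 v by exact: cw.
case/connectP => p pp lastp.
have reach : forall p x, ytf y x = m -> path (edge w) x p -> ytf y (last x p) = m.
  elim=> [//|a p' IH] x Qx /= /andP [exa pp'].
  by apply: IH pp'; exact: step Qx exa.
have := reach p i0 Q0 pp.
rewrite -lastp /ytf eqxx => m0; move: mneg; rewrite -m0 ltxx.
by [].
Qed.


Lemma Bd_unit d : valid d -> Bd d \in unitmx.
Proof.
move=> vd; apply: inj_unit => y hy.
have h1 := minp vd (y := y).
have h2 := minp vd (y := - y).
apply/matrixP => i j; rewrite ord1 mxE; apply/eqP; rewrite eq_le; apply/andP; split.
  have : 0 <= (- y) i 0.
    by apply: h2 => k; rewrite mulmxN hy oppr0 mxE.
  by rewrite mxE oppr_ge0.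
by apply: h1 => k; rewrite hy mxE.
Qed.

Lemma Xd_ge0 d : valid d -> forall i j, 0 <= invmx (Bd d) i j.
Proof.
move=> vd i j.
have e : Bd d *m col j (invmx (Bd d)) = col j 1%:M.
  by rewrite !colE mulmxA mulmxV // Bd_unit.
have := minp vd (y := col j (invmx (Bd d))); rewrite e => h.
have hh : forall k, 0 <= (col j (1%:M : 'M[R]_n)) k 0.
  by move=> k; rewrite !mxE; case: (k == j).
by have := h hh i; rewrite mxE.
Qed.

Lemma Xdiff d d' : valid d -> valid d' ->
  invmx (Bd d) - invmx (Bd d') = invmx (Bd d) *m (Bd d' - Bd d) *m invmx (Bd d').
Proof.
move=> vd vd'.
rewrite mulmxBr mulmxBl (mulVmx (Bd_unit vd)) mul1mx -mulmxA.
by rewrite (mulmxV (Bd_unit vd')) mulmx1.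
Qed.

Lemma Xdiff_entry d d' i j :
  (invmx (Bd d) *m (Bd d' - Bd d) *m invmx (Bd d')) i j =
  \sum_k invmx (Bd d) i k * (d' k - d k) * invmx (Bd d') k j.
Proof.
rewrite mxE; apply: eq_bigr => k _; congr (_ * _).
rewrite mxE (bigD1 k) //= big1 ?addr0.
  by rewrite BdBE eqxx mul1r.
by move=> l lk; rewrite BdBE (negbTE lk) mul0r mulr0.
Qed.

Lemma Xmono d d' : valid d -> valid d' -> (forall i, d i <= d' i) ->
  forall i j, invmx (Bd d') i j <= invmx (Bd d) i j.
Proof.
move=> vd vd' le i j; rewrite -subr_ge0.
have -> : invmx (Bd d) i j - invmx (Bd d') i j = (invmx (Bd d) - invmx (Bd d')) i j.
  by rewrite [RHS]mxE [X in _ = _ + X]mxE.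
rewrite Xdiff // Xdiff_entry; apply: sumr_ge0 => k _.
apply: mulr_ge0; last exact: Xd_ge0.
by apply: mulr_ge0; [exact: Xd_ge0 | rewrite subr_ge0].
Qed.

End Mono.


Section Sets.
Variables (R : realType) (n : nat) (w : 'I_n -> 'I_n -> R) (v : 'I_n).
Variables (U : {set 'I_n}) (wv : 'I_n -> R).
Hypothesis wg : wgraph w.
Hypothesis cw : connected_graph w.
Hypothesis vU : v \notin U.
Hypothesis wvpos : forall u, u \in U -> 0 < wv u.

Definition dT (T : {set 'I_n}) i := if i \in T then wv i else 0.

Lemma validT (T : {set 'I_n}) : T \subset U -> valid v (dT T).
Proof.
move=> TU; split.
  by move=> i; rewrite /dT; case: ifP => // iT; apply: ltW; apply: wvpos; apply: (subsetP TU).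
rewrite /dT; case: ifP => // vT; move: vU; by rewrite (subsetP TU).
Qed.

Lemma add_sym (T : {set 'I_n}) i j : add_edges w v wv T i j = add_edges w v wv T j i.
Proof.
case: wg => sw _; rewrite /add_edges sw; ring.
Qed.

Lemma gmx_add (T : {set 'I_n}) : T \subset U -> gmx v (add_edges w v wv T) = Bd v w (dT T).
Proof.
move=> TU; apply/matrixP => i j; rewrite BdE !gmxE.
have vT : v \notin T by apply: contra vU; apply: (subsetP TU).
have [iv|iv] := eqVneq i v.
  by rewrite /dT iv (negbTE vT) mulr0 addr0.
have [jv|jv] := eqVneq j v.
  by rewrite jv (negbTE iv) mul0r addr0.
rewrite !lapE /add_edges (negbTE iv) (negbTE jv) /= !addr0.
have [ij|ij] := eqVneq i j; last by rewrite mul0r addr0.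
rewrite mul1r big_split /= big_split /=.
rewrite big1_eq addr0 [X in _ + X - _](bigD1 v) //= eqxx /= [X in _ + (_ + X) - _]big1; last by move=> k kv; rewrite (negbTE kv).

rewrite /dT; case: (i \in T); ring.
Qed.

Definition fR T := \tr (invmx (Bd v w (dT T))).

Lemma RS_f (T : {set 'I_n}) : T \subset U -> RS w v wv T = fR T - 1.
Proof.
move=> TU.
have uG : gmx v (add_edges w v wv T) \in unitmx.
  by rewrite gmx_add // Bd_unit //; exact: validT.
by rewrite /RS (node_res (add_sym T) uG) gmx_add.
Qed.


Lemma dT_le (T T' : {set 'I_n}) : T \subset T' -> T' \subset U -> forall i, dT T i <= dT T' i.
Proof.
move=> TT' T'U i; rewrite /dT; case: ifP => iT.
  by rewrite (subsetP TT' _ iT).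
by case: (validT T'U) => h _; have := h i; rewrite /dT.
Qed.

Lemma f_mono (T T' : {set 'I_n}) : T \subset T' -> T' \subset U -> fR T' <= fR T.
Proof.
move=> TT' T'U; rewrite /fR /mxtrace; apply: ler_sum => i _.
apply: (Xmono wg cw); [exact: validT (subset_trans TT' T'U) | exact: validT | exact: dT_le].
Qed.

Lemma U1_sub (T : {set 'I_n}) e : T \subset U -> e \in U -> e |: T \subset U.
Proof.
move=> TU eU; apply/subsetP => x; rewrite in_setU1 => /orP [/eqP ->|] //.
exact: (subsetP TU).
Qed.

Lemma gainE (T : {set 'I_n}) e : T \subset U -> e \in U -> e \notin T ->
  fR T - fR (e |: T) = \sum_i invmx (Bd v w (dT T)) i e * wv e * invmx (Bd v w (dT (e |: T))) e i.
Proof.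
move=> TU eU eT; rewrite /fR /mxtrace -sumrB; apply: eq_bigr => i _.
have -> : invmx (Bd v w (dT T)) i i - invmx (Bd v w (dT (e |: T))) i i
  = (invmx (Bd v w (dT T)) - invmx (Bd v w (dT (e |: T)))) i i.
  by rewrite [RHS]mxE [X in _ = _ + X]mxE.
rewrite (Xdiff wg cw (validT TU) (validT (U1_sub TU eU))) Xdiff_entry.
rewrite (bigD1 e) //= big1 ?addr0.
  by rewrite /dT in_setU1 eqxx /= (negbTE eT) subr0.
move=> k ke; rewrite /dT in_setU1 (negbTE ke) /=.
by rewrite subrr mulr0 mul0r.
Qed.

Lemma gain_ge0 (T : {set 'I_n}) e : T \subset U -> e \in U -> 0 <= fR T - fR (e |: T).
Proof.
move=> TU eU; rewrite subr_ge0; apply: f_mono; last exact: U1_sub.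
by apply/subsetP => x xT; rewrite in_setU1 xT orbT.
Qed.

Lemma submod (T T' : {set 'I_n}) e : T \subset T' -> T' \subset U -> e \in U ->
  fR T' - fR (e |: T') <= fR T - fR (e |: T).
Proof.
move=> TT' T'U eU.
have TU := subset_trans TT' T'U.
case eT' : (e \in T').
  have -> : e |: T' = T'.
    by apply/setP => x; rewrite in_setU1; case: eqP => // ->; rewrite eT'.
  by rewrite subrr; apply: gain_ge0.
have eT : e \notin T by apply/negP => /(subsetP TT'); rewrite eT'.
rewrite !gainE ?eT' //; apply: ler_sum => i _.
have vT := validT TU; have vT' := validT T'U.
have vTe := validT (U1_sub TU eU); have vTe' := validT (U1_sub T'U eU).
have wv0 : 0 <= wv e by apply: ltW; exact: wvpos.
apply: ler_pM.
- by apply: mulr_ge0 => //; exact: (Xd_ge0 wg cw).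
- exact: (Xd_ge0 wg cw).
- apply: ler_wpM2r => //; apply: (Xmono wg cw) => //; exact: dT_le.
- apply: (Xmono wg cw) => //; apply: dT_le; last exact: U1_sub.
  by apply/subsetP => x; rewrite !in_setU1 => /orP [->|/(subsetP TT') ->]; rewrite ?orbT.
Qed.

Lemma tele (T : {set 'I_n}) (s : seq 'I_n) g : T \subset U -> {subset s <= U} ->
  (forall e, e \in s -> fR T - fR (e |: T) <= g) ->
  fR T - fR (T :|: [set x in s]) <= (size s)%:R * g.
Proof.
move=> TU; elim: s => [|a s IH] sU hg /=.
  have -> : T :|: [set x in [::]] = T by apply/setP => x; rewrite !inE orbF.
  by rewrite subrr mul0r.
have sU' : {subset s <= U} by move=> x xs; apply: sU; rewrite inE xs orbT.
have SU : T :|: [set x in s] \subset U.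
  by apply/subsetP => x; rewrite !inE => /orP [/(subsetP TU)|/sU'].
have -> : T :|: [set x in a :: s] = a |: (T :|: [set x in s]).
  by apply/setP => x; rewrite !inE orbCA.
have aU : a \in U by apply: sU; rewrite inE eqxx.
have e1 : fR T - fR (a |: (T :|: [set x in s])) =
  (fR T - fR (T :|: [set x in s])) + (fR (T :|: [set x in s]) - fR (a |: (T :|: [set x in s]))).
  by rewrite addrA subrK.
rewrite e1 -addn1 natrD mulrDl mul1r; apply: lerD.
  by apply: IH => // e es; apply: hg; rewrite inE es orbT.
apply: le_trans (hg a _); last by rewrite inE eqxx.
apply: submod => //.
by apply/subsetP => x xT; rewrite inE xT.
Qed.

End Sets.


Lemma pow_le_expR (R : realType) (k : nat) : (0 < k)%N ->
  (1 - (k%:R : R)^-1) ^+ k <= (expR 1)^-1.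
Proof.
move=> k0.
have kR : (k%:R : R) != 0 by rewrite pnatr_eq0 -lt0n.
have kpos : (0 : R) < k%:R by rewrite ltr0n.
have c1 : (k%:R : R)^-1 <= 1 by rewrite invf_le1 // ler1n.
have h1 : 1 - (k%:R : R)^-1 <= expR (- (k%:R)^-1).
  by have := expR_ge1Dx (- (k%:R : R)^-1).
apply: le_trans (lerXn2r k _ _ h1) _.
- by rewrite nnegrE subr_ge0.
- by rewrite nnegrE expR_ge0.
rewrite -expRM_natl mulrN mulfV // expRN.
by [].
Qed.

Lemma nemhauser (R : realType) (k : nat) (F : nat -> R) (OPT : R) : (0 < k)%N ->
  F 0%N = 0 -> 0 <= OPT ->
  (forall i, (i < k)%N -> OPT <= F i + k%:R * (F i.+1 - F i)) ->
  (1 - (expR 1)^-1) * OPT <= F k.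
Proof.
move=> k0 F0 O0 H.
have kR : (k%:R : R) != 0 by rewrite pnatr_eq0 -lt0n.
have kpos : (0 : R) < k%:R by rewrite ltr0n.
set c := (k%:R : R)^-1.
have c1 : c <= 1 by rewrite /c invf_le1 // ler1n.
have c0 : 0 <= c by rewrite /c invr_ge0 ltW.
have ck : c * k%:R = 1 by rewrite /c mulVf.
have claim : forall i, (i <= k)%N -> OPT - F i <= (1 - c) ^+ i * OPT.
  elim=> [|i IH] ik; first by rewrite F0 expr0 mul1r subr0.
  have ik' : (i < k)%N by [].
  have := H i ik'; set g := F i.+1 - F i => Hi.
  have step : OPT - F i.+1 <= (1 - c) * (OPT - F i).
    have -> : OPT - F i.+1 = (OPT - F i) - g by rewrite /g; ring.
    have : c * (OPT - F i) <= c * (k%:R * g).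
      by apply: ler_wpM2l => //; rewrite lerBlDl.
    rewrite mulrA ck mul1r => h; lra.
  apply: le_trans step _; rewrite exprS -mulrA; apply: ler_wpM2l.
    by rewrite subr_ge0.
  exact: IH (ltnW ik).
have := claim k (leqnn k).
have := pow_le_expR R k0; rewrite -/c => hp.
have : (1 - c) ^+ k * OPT <= (expR 1)^-1 * OPT by apply: ler_wpM2r.
lra.
Qed.

Unset Implicit Arguments.

Theorem theorem3 (R : realType) (n : nat) (w : 'I_n -> 'I_n -> R) (v : 'I_n)
  (U : {set 'I_n}) (wv : 'I_n -> R) (k : nat) :
  wgraph w -> connected_graph w ->
  v \notin U -> (forall u, u \in U -> w u v = 0) ->
  (forall u, u \in U -> 0 < wv u) ->
  (0 < k)%N -> (k <= #|U|)%N ->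
  forall s : seq 'I_n, greedy_run w v wv U k s ->
  forall Sstar : {set 'I_n}, Sstar \subset U -> #|Sstar| = k ->
  (forall S' : {set 'I_n}, S' \subset U -> #|S'| = k -> RS w v wv Sstar <= RS w v wv S') ->
  RS w v wv set0 - RS w v wv [set x in s]
    >= (1 - (expR 1)^-1) * (RS w v wv set0 - RS w v wv Sstar).
Proof.
move=> wg cw vU _ wvpos k0 _ s [ss H] Sstar SsU Ssk _.
have sU : {subset s <= U}.
  move=> x xs; have jlt : (index x s < k)%N by rewrite -ss index_mem.
  have [h _] := H _ jlt x.
  by move: h; rewrite nth_index // in_setD => /andP [_ ->].
pose S i := [set x in take i s].
have SU : forall i, S i \subset U.
  by move=> i; apply/subsetP => x; rewrite inE => /mem_take/sU.
pose ff := fR w v wv.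
have RSf := RS_f wg cw vU wvpos.
have fmono := f_mono wg cw vU wvpos.
pose F i := ff set0 - ff (S i).
pose OPT := ff set0 - ff Sstar.
have S0 : S 0%N = set0 by apply/setP => x; rewrite /S take0 !inE.
have Sk : S k = [set x in s] by rewrite /S -ss take_size.
have -> : RS w v wv set0 - RS w v wv [set x in s] = F k.
  by rewrite -Sk !RSf ?sub0set ?SU // /F /ff; ring.
have -> : RS w v wv set0 - RS w v wv Sstar = OPT.
  by rewrite !RSf ?sub0set // /OPT /ff; ring.
apply: nemhauser => //.
- by rewrite /F S0 subrr.
- by rewrite /OPT subr_ge0; apply: fmono => //; exact: sub0set.
move=> i ik.
have ilt : (i < size s)%N by rewrite ss.
have [eiU Hg] := H i ik v.
set ei := nth v s i in eiU Hg.
have Si1 : S i.+1 = ei |: S i.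
  by apply/setP => x; rewrite /S (take_nth v ilt) !inE mem_rcons in_cons.
set g := F i.+1 - F i.
have gE : g = ff (S i) - ff (ei |: S i) by rewrite /g /F Si1; ring.
have eiU' : ei \in U by move: eiU; rewrite in_setD => /andP [_].
have hg : forall e, e \in enum Sstar -> ff (S i) - ff (e |: S i) <= g.
  move=> e; rewrite mem_enum => eS.
  have eU : e \in U by apply: (subsetP SsU).
  case eSi : (e \in S i).
    have -> : e |: S i = S i.
      by apply/setP => x; rewrite in_setU1; case: eqP => // ->; rewrite eSi.
    by rewrite subrr gE; apply: (gain_ge0 wg cw vU wvpos).
  have := Hg e; rewrite in_setD eSi eU => /(_ isT).
  by rewrite gE !RSf ?U1_sub ?SU //; rewrite /ff; lra.
have eSU : {subset enum Sstar <= U} by move=> x; rewrite mem_enum; apply: (subsetP SsU).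
have tl := tele wg cw vU wvpos (SU i) eSU hg.
rewrite set_enum -cardE Ssk in tl.
have m : ff (S i :|: Sstar) <= ff Sstar.
  by apply: fmono; [exact: subsetUr | rewrite subUset SU SsU].
rewrite /OPT /F -/g; move: tl m; set kg := k%:R * g; rewrite /ff; lra.
Qed.
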